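(* Let $G$ be a scheduling game on $m$ identical machines of speed $1$ in which every job $i$ has processing-time function $p_i(t)=b_i+at$ with $b_i\ge0$ and a common rate $a>0$, and in which all machines use the SBPT global priority list (non-decreasing order of $b_i$, ties broken arbitrarily). Then every pure Nash equilibrium $\sigma$ of $G$ satisfies $$C_{\max}(\sigma)\le\frac{2m+am-1}{m+a}\cdot OPT(G).$$
   Context: Scheduling game: a finite set $N$ of $n$ jobs (players) and a set $M$ of $m$ machines; machine $j$ has speed $s_j>0$. With a global priority list, all machines share the same bijection $\pi:N\to\{1,\dots,n\}$, and job $u$ has higher priority than $v$ iff $\pi(u)<\pi(v)$. A profile $\sigma\in M^N$ assigns each job to a machine. On machine $j$, the jobs assigned to it, listed in increasing $\pi$-order as $i_1,i_2,\dots$, are processed without idle time: $S_{i_1}(\sigma)=0$, $C_{i_k}(\sigma)=S_{i_k}(\sigma)+p_{i_k}(S_{i_k}(\sigma))/s_j$, $S_{i_{k+1}}(\sigma)=C_{i_k}(\sigma)$. The cost of job $i$ is $C_i(\sigma)$. A pure Nash equilibrium (NE) is a profile in which no job can strictly decrease its completion time by unilaterally changing its machine. Makespan $C_{\max}(\sigma)=\max_iC_i(\sigma)$; $OPT(G)=\min_\sigma C_{\max}(\sigma)$ over all profiles. *)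

(* Defs.v *)
From HB Require Import structures.
From mathcomp Require Import all_boot all_order all_algebra all_fingroup.
Set Implicit Arguments. Unset Strict Implicit. Unset Printing Implicit Defensive.
Import Order.TTheory GRing.Theory Num.Theory.
Local Open Scope ring_scope.

Section Game.
Variables (R : realFieldType) (n m : nat).
Variable (s : 'I_m -> R).
Variable (p : 'I_n -> R -> R).
Variable (pi : {perm 'I_n}).           (* global priority: pi u = rank of u *)

Definition profile := {ffun 'I_n -> 'I_m}.

Definition prio_order : seq 'I_n := [seq (pi^-1)%g r | r <- enum 'I_n].

Definition jobs_upto (sigma : profile) (i : 'I_n) : seq 'I_n :=
  [seq k <- prio_order | (sigma k == sigma i) && (pi k <= pi i)%N].

(* completion time: processed without idle time starting at 0,
   C = S + p(S)/s, next start = previous completion *)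
Definition completion (sigma : profile) (i : 'I_n) : R :=
  foldl (fun t k => t + p k t / s (sigma i)) 0 (jobs_upto sigma i).

Definition deviate (sigma : profile) (i : 'I_n) (j : 'I_m) : profile :=
  [ffun k => if k == i then j else sigma k].

Definition is_NE (sigma : profile) : Prop :=
  forall (i : 'I_n) (j : 'I_m), completion sigma i <= completion (deviate sigma i j) i.

Definition makespan (sigma : profile) : R :=
  \big[Num.max/0]_(i : 'I_n) completion sigma i.

(* OPT(G): minimum makespan over all profiles (sigma0 is any profile,
   only used as the initial value of the finite minimum; it is among the
   profiles minimized over, so the value does not depend on it) *)
Definition OPT (sigma0 : profile) : R :=
  \big[Num.min/makespan sigma0]_(tau : profile) makespan tau.
End Game.

Definition SBPT (R : realFieldType) (n : nat) (b : 'I_n -> R) (pi : {perm 'I_n}) : Prop :=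
  forall u v : 'I_n, (pi u < pi v)%N -> b u <= b v.

(* Main.v *)
Require Import Defs.
From HB Require Import structures.
From mathcomp Require Import all_boot all_order all_algebra all_fingroup.
From mathcomp Require Import zify ring lra.
Import Order.TTheory GRing.Theory Num.Theory.
Local Open Scope ring_scope.
Set Implicit Arguments. Unset Strict Implicit. Unset Printing Implicit Defensive.

Section Proof.
Variables (R : realFieldType) (n m : nat) (a : R) (b : 'I_n -> R) (pi : {perm 'I_n}) (x0 : 'I_n).

Definition q : R := 1 + a.
Definition job (r : nat) : 'I_n := (pi^-1)%g (insubd x0 r).
Definition bb (r : nat) : R := b (job r).
Definition mach (rho : {ffun 'I_n -> 'I_m}) (r : nat) : 'I_m := rho (job r).
Fixpoint W (rho : {ffun 'I_n -> 'I_m}) (k : 'I_m) (t : nat) : R :=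
  match t with
  | 0 => 0
  | t'.+1 => if (t' < n)%N && (mach rho t' == k) then q * W rho k t' + bb t' else W rho k t'
  end.

Lemma pi_job r : (r < n)%N -> pi (job r) = r :> nat.
Proof. by move=> h; rewrite /job permKV insubdK. Qed.

Lemma job_pi i : job (pi i) = i.
Proof. by rewrite /job valKd permK. Qed.

Lemma prioE : prio_order pi = [seq job r | r <- iota 0 n].
Proof.
rewrite /prio_order -val_enum_ord -map_comp; apply: eq_map => r /=.
by rewrite /job valKd.
Qed.

Lemma foldl_ext (T S : Type) (f g : S -> T -> S) z l :
  (forall x y, f x y = g x y) -> foldl f z l = foldl g z l.
Proof. by move=> h; elim: l z => //= x l IH z; rewrite h IH. Qed.

Lemma foldl_map' (T1 T2 S : Type) (f : S -> T2 -> S) (g : T1 -> T2) z l :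
  foldl f z (map g l) = foldl (fun x y => f x (g y)) z l.
Proof. by elim: l z => //= x l IH z. Qed.

Lemma foldW rho k t :
  foldl (fun x r => q * x + bb r) 0 [seq r <- iota 0 t | (r < n)%N && (mach rho r == k)] = W rho k t.
Proof.
elim: t => [//|t IH].
rewrite -[in iota _ _]addn1 iotaD filter_cat foldl_cat IH add0n /=.
by case: ifP.
Qed.

Lemma completionE rho i :
  completion (fun _ => 1) (fun i t => b i + a * t) pi rho i = W rho (rho i) (pi i).+1.
Proof.
rewrite /completion /jobs_upto prioE filter_map foldl_map' -foldW.
rewrite (foldl_ext (g := fun x r => q * x + bb r)); last first.
  by move=> x y; rewrite divr1 /q /bb; ring.
congr foldl.
have hi : (pi i < n)%N by [].
have -> : iota 0 n = iota 0 (pi i).+1 ++ iota (pi i).+1 (n - (pi i).+1).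
  by rewrite -iotaD subnKC.
rewrite filter_cat.
rewrite [X in _ ++ X](@eq_in_filter _ _ pred0); last first.
  move=> r; rewrite mem_iota => /andP[h1 h2].
  rewrite (subnKC hi) in h2.
  by rewrite /= pi_job // leqNgt h1 andbF.
rewrite filter_pred0 cats0; apply: eq_in_filter => r; rewrite mem_iota /= => h.
have hr : (r < n)%N by move: h hi; rewrite add0n; lia.
have hr2 : (r <= pi i)%N by move: h; rewrite add0n; lia.
by rewrite /= pi_job // hr hr2 /mach andbT.
Qed.

Hypotheses (ha : 0 < a) (hb : forall i, 0 <= b i) (hs : SBPT b pi).

Lemma q_gt0 : 0 < q. Proof. rewrite /q; move: ha; lra. Qed.
Lemma q_ge1 : 1 <= q. Proof. rewrite /q; move: ha; lra. Qed.
Lemma bb_ge0 r : 0 <= bb r. Proof. exact: hb. Qed.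

Lemma bb_mono r t : (r <= t)%N -> (t < n)%N -> bb r <= bb t.
Proof.
move=> hrt htn; rewrite leq_eqVlt in hrt; case/orP: hrt => [/eqP -> //|hrt].
apply: hs; rewrite !pi_job //; exact: ltn_trans htn.
Qed.

Lemma W_ge0 rho k t : 0 <= W rho k t.
Proof.
elim: t => [|t IH] /=; first by [].
case: ifP => // _; apply: addr_ge0 (bb_ge0 _); apply: mulr_ge0 => //.
exact: ltW q_gt0.
Qed.

Lemma W_step rho k t : W rho k t <= W rho k t.+1.
Proof.
rewrite /=; case: ifP => // _.
have := W_ge0 rho k t; have := bb_ge0 t; rewrite /q => h1 h2.
have : 0 <= a * W rho k t by apply: mulr_ge0 => //; exact: ltW.
lra.
Qed.

Lemma W_mono rho k t t' : (t <= t')%N -> W rho k t <= W rho k t'.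
Proof.
elim: t' => [|t' IH]; first by rewrite leqn0 => /eqP ->.
rewrite leq_eqVlt => /orP[/eqP -> //|h].
exact: le_trans (IH h) (W_step _ _ _).
Qed.

Lemma W_ext rho rho' k t :
  (forall r, (r < t)%N -> (r < n)%N -> mach rho r = mach rho' r) -> W rho k t = W rho' k t.
Proof.
elim: t => [//|t IH] h /=.
rewrite IH; last by move=> r hr; apply: h; exact: ltnW.
case hn: (t < n)%N => //=; by rewrite h.
Qed.

Lemma W_last rho i : W rho (rho i) (pi i).+1 = q * W rho (rho i) (pi i) + b i.
Proof. by rewrite /= ltn_ord /mach job_pi eqxx /bb job_pi. Qed.

Lemma compE rho i :
  completion (fun _ => 1) (fun i t => b i + a * t) pi rho i = q * W rho (rho i) (pi i) + b i.
Proof. by rewrite completionE W_last. Qed.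

Lemma NE_W sigma : is_NE (fun _ => 1) (fun i t => b i + a * t) pi sigma ->
  forall i k, W sigma (sigma i) (pi i) <= W sigma k (pi i).
Proof.
move=> hNE i k; have := hNE i k.
rewrite !compE ffunE eqxx.
rewrite (@W_ext (deviate sigma i k) sigma); last first.
  move=> r hr hrn; rewrite /mach ffunE.
  case: eqP => // e; move: hr; by rewrite -e pi_job // ltnn.
rewrite lerD2r => h.
by rewrite -(ler_pM2l q_gt0).
Qed.

Section Sigma.
Variable sigma : {ffun 'I_n -> 'I_m}.
Hypothesis hNE : is_NE (fun _ => 1) (fun i t => b i + a * t) pi sigma.
Hypothesis hm : (0 < m)%N.

Definition S t := W sigma (mach sigma t) t.
Definition C t := q * S t + bb t.

Lemma S_ge0 t : 0 <= S t. Proof. exact: W_ge0. Qed.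
Lemma C_ge0 t : 0 <= C t.
Proof. apply: addr_ge0 (bb_ge0 _); apply: mulr_ge0 (S_ge0 _); exact: ltW q_gt0. Qed.

Lemma NE_S t k : (t < n)%N -> S t <= W sigma k t.
Proof.
move=> ht; have := NE_W hNE (job t) k.
by rewrite /S /mach pi_job.
Qed.

Lemma C_step t : (t.+1 < n)%N -> C t <= C t.+1.
Proof.
move=> ht; rewrite /C.
have h1 : S t <= S t.+1.
  apply: le_trans (NE_S (mach sigma t.+1) (ltnW ht)) _; exact: W_step.
have h2 : bb t <= bb t.+1 by apply: bb_mono.
have h3 : q * S t <= q * S t.+1 by apply: ler_wpM2l => //; exact: ltW q_gt0.
lra.
Qed.

Lemma E_bound t k : (t < n)%N -> W sigma k t.+1 <= C t.
Proof.
elim: t k => [|t IH] k ht.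
  rewrite /= ht /=; case: ifP => _; first by rewrite /C /S.
  exact: C_ge0.
rewrite [W _ _ _.+1]/= ht /=; case: ifP => [/eqP <-|_]; first by [].
apply: le_trans (IH k (ltnW ht)) _; exact: C_step.
Qed.

Lemma pigeon u t : (t - u < m)%N -> exists k : 'I_m, forall r, (u <= r < t)%N -> mach sigma r != k.
Proof.
move=> h.
pose f := fun x : 'I_(t - u) => mach sigma (u + x).
have : ~~ ([set: 'I_m] \subset [set f x | x in 'I_(t-u)]).
  apply/negP => /subset_leq_card; rewrite cardsT card_ord.
  move=> h2; have := leq_trans h2 (leq_imset_card _ _); rewrite card_ord.
  by rewrite leqNgt h.
case/subsetPn => k _ hk; exists k => r /andP[h1 h2]; apply/negP => /eqP e.
have hx : (r - u < t - u)%N by lia.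
move: hk; rewrite -e.
have -> : mach sigma r = f (Ordinal hx) by rewrite /f /= subnKC.
by rewrite imset_f.
Qed.

Lemma W_const k u t : (u <= t)%N -> (forall r, (u <= r < t)%N -> mach sigma r != k) ->
  W sigma k t = W sigma k u.
Proof.
elim: t => [|t IH]; first by rewrite leqn0 => /eqP ->.
rewrite leq_eqVlt => /orP[/eqP -> //|hu] h.
rewrite /= (negbTE (h t _)) ?andbF; last by rewrite -ltnS hu /=.
by apply: IH => // r /andP[h1 h2]; apply: h; rewrite h1 ltnW.
Qed.

Lemma S_small t : (t < n)%N -> (t < m)%N -> S t <= 0.
Proof.
move=> htn htm; have [k hk] : exists k : 'I_m, forall r, (0 <= r < t)%N -> mach sigma r != k.
  by apply: pigeon; rewrite subn0.
apply: le_trans (NE_S k htn) _.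
by rewrite (@W_const k 0 t).
Qed.

Lemma S_big d : (m + d < n)%N -> S (m + d) <= C d.
Proof.
move=> hn; have [k hk] : exists k : 'I_m, forall r, (d.+1 <= r < m + d)%N -> mach sigma r != k.
  by apply: pigeon; lia.
apply: le_trans (NE_S k hn) _.
rewrite (@W_const k d.+1 (m + d)) //; last by lia.
apply: E_bound; lia.
Qed.

Definition RR t := \sum_(0 <= r < t) bb r * q ^+ ((t.-1 - r) %/ m).

Lemma RR_ge_last t : bb t <= RR t.+1.
Proof.
rewrite /RR big_nat_recr //= subnn div0n expr0 mulr1.
rewrite -{1}[bb t]add0r lerD2r; apply: sumr_ge0 => r _.
apply: mulr_ge0 (bb_ge0 _) _; apply: exprn_ge0; exact: ltW q_gt0.
Qed.

Lemma RR_rec d : RR (m + d).+1 = \sum_(d.+1 <= r < (m + d).+1) bb r + q * RR d.+1.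
Proof.
rewrite /RR (@big_cat_nat _ _ _ d.+1) //=; last by lia.
rewrite addrC; congr (_ + _).
  apply: eq_big_nat => r hr; rewrite divn_small ?expr0 ?mulr1 //; lia.
rewrite mulr_sumr; apply: eq_big_nat => r hr.
have -> : (m + d - r = (d - r) + 1 * m)%N by lia.
by rewrite divnDMl // addn1 exprS; ring.
Qed.

Lemma window d : (m + d < n)%N ->
  bb (m + d) + (m.-1)%:R * bb d <= \sum_(d.+1 <= r < (m + d).+1) bb r.
Proof.
move=> hn; rewrite big_nat_recr /=; last by lia.
rewrite [X in X <= _]addrC lerD2r.
have -> : (m.-1)%:R * bb d = \sum_(d.+1 <= r < m + d) bb d.
  by rewrite sumr_const_nat mulr_natl; congr (_ *+ _); lia.
apply: ler_sum_nat => r hr; apply: bb_mono; lia.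
Qed.

Lemma Z_bound t : (t < n)%N -> (m%:R + a) * S t + bb t <= RR t.+1.
Proof.
elim/ltn_ind: t => t IH ht.
have hma : 0 < m%:R + a by have : (0 : R) <= m%:R by []; move: ha; lra.
case: (ltnP t m) => htm.
  have h1 := S_small ht htm.
  have h2 : (m%:R + a) * S t <= 0 by rewrite pmulr_rle0.
  have h3 := RR_ge_last t; lra.
have [d ed] : exists d, t = (m + d)%N by exists (t - m)%N; lia.
subst t.
have hd : (d < m + d)%N by lia.
have ihd := IH d hd (ltn_trans hd ht).
rewrite RR_rec.
have hw := window ht.
have hS := S_big ht.
have h1 : (m%:R + a) * S (m + d) <= (m%:R + a) * C d by rewrite ler_pM2l.
have hq := q_gt0.
have h2 : q * ((m%:R + a) * S d + bb d) <= q * RR d.+1 by rewrite ler_pM2l.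
have em : (m.-1)%:R = m%:R - 1 :> R.
  by rewrite -{2}(prednK hm) -natr1 addrK.
rewrite em in hw; move: h1 h2 hw; rewrite /C /q; nra.
Qed.
End Sigma.

Section Tau.
Variable rho : {ffun 'I_n -> 'I_m}.
Hypothesis hm : (0 < m)%N.

Definition cnt k r t := (\sum_(r.+1 <= r' < t) ((r' < n) && (mach rho r' == k) : nat))%N.

Lemma cnt_last k t : cnt k t t.+1 = 0%N.
Proof. by rewrite /cnt big_geq. Qed.

Lemma cnt_rec k r t : (r < t)%N ->
  cnt k r t.+1 = (cnt k r t + ((t < n) && (mach rho t == k)))%N.
Proof. by move=> h; rewrite /cnt big_nat_recr. Qed.

Lemma bool_sum_le (P : pred nat) i t : (\sum_(i <= r < t) (P r : nat) <= t - i)%N.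
Proof.
apply: leq_trans (_ : \sum_(i <= r < t) 1 <= _)%N.
  by apply: leq_sum => r _; case: (P r).
by rewrite sum_nat_const_nat muln1.
Qed.

Lemma W_closed k t : W rho k t =
  \sum_(0 <= r < t) (if (r < n)%N && (mach rho r == k) then bb r * q ^+ cnt k r t else 0).
Proof.
elim: t => [|t IH]; first by rewrite big_geq.
rewrite big_nat_recr //= cnt_last expr0 mulr1.
case: ifP => hc.
  rewrite IH mulr_sumr; congr (_ + _); apply: eq_big_nat => r hr.
  rewrite cnt_rec; last by case/andP: hr.
  rewrite hc addn1 exprS; case: ifP => _; [ring | by rewrite mulr0].
rewrite addr0 IH; apply: eq_big_nat => r hr.
by rewrite cnt_rec ?hc ?addn0 //; case/andP: hr.
Qed.

Definition cc t r := cnt (mach rho r) r t.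

Lemma sumW t : (t <= n)%N ->
  \sum_(k < m) W rho k t = \sum_(0 <= r < t) bb r * q ^+ cc t r.
Proof.
move=> htn.
under eq_bigr do rewrite W_closed.
rewrite exchange_big /=; apply: eq_big_nat => r hr.
have hrn : (r < n)%N by apply: leq_trans htn; case/andP: hr.
rewrite (bigD1 (mach rho r)) //= hrn eqxx /= big1 ?addr0 //.
by move=> k /negbTE hk; rewrite eq_sym hk.
Qed.

Lemma level_one k s t :
  (\sum_(0 <= r < t) ((r < n) && (mach rho r == k) && (cnt k r t < s)) <= s)%N.
Proof.
elim: t s => [|t IH] s; first by rewrite big_geq.
rewrite big_nat_recr //= cnt_last.
case hc: ((t < n)%N && (mach rho t == k)).
  case: s => [|s].
    rewrite big1_seq //= => r _; by rewrite ltn0 andbF.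
  rewrite /= addn1 ltnS.
  apply: leq_trans (IH s); rewrite leq_eqVlt; apply/orP; left; apply/eqP.
  apply: eq_big_nat => r hr; rewrite cnt_rec ?hc ?addn1 ?ltnS //; by case/andP: hr.
rewrite /= addn0.
apply: leq_trans (IH s); rewrite leq_eqVlt; apply/orP; left; apply/eqP.
apply: eq_big_nat => r hr; rewrite cnt_rec ?hc ?addn0 //; by case/andP: hr.
Qed.

Lemma level_all s t :
  (\sum_(0 <= r < t) ((r < n) && (cc t r < s)) <= m * s)%N.
Proof.
have -> : (\sum_(0 <= r < t) ((r < n) && (cc t r < s)) =
  \sum_(k < m) \sum_(0 <= r < t) ((r < n) && (mach rho r == k) && (cnt k r t < s)))%N.
  rewrite exchange_big /=; apply: eq_big_nat => r _.
  rewrite (bigD1 (mach rho r)) //= eqxx andbT big1 ?addn0 // => k /negbTE hk.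
  by rewrite eq_sym hk andbF.
apply: leq_trans (_ : \sum_(k < m) s <= _)%N.
  by apply: leq_sum => k _; exact: level_one.
by rewrite sum_nat_const card_ord.
Qed.

Lemma cc_le t r : (cc t r <= t)%N.
Proof. by apply: leq_trans (bool_sum_le _ _ _) _; exact: leq_subr. Qed.

Definition w s := if s is s'.+1 then a * q ^+ s' else 1.

Lemma w_ge0 s : 0 <= w s.
Proof.
case: s => [|s] /=; first exact: ler01.
apply: mulr_ge0; [exact: ltW | apply: exprn_ge0; exact: ltW q_gt0].
Qed.

Lemma geom c : \sum_(0 <= s < c.+1) w s = q ^+ c.
Proof.
elim: c => [|c IH]; first by rewrite big_nat1.
rewrite big_nat_recr //= IH exprS /q; ring.
Qed.

Lemma geomT c T : (c <= T)%N -> q ^+ c = \sum_(0 <= s < T.+1) (if (s <= c)%N then w s else 0).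
Proof.
move=> h; rewrite (@big_cat_nat _ _ _ c.+1) //=.
rewrite [X in _ + X]big1_seq ?addr0; last first.
  move=> s /andP[_]; rewrite mem_index_iota => /andP[h1 _]; by rewrite leqNgt h1.
rewrite -geom; apply: eq_big_nat => s /andP[_ h1]; by rewrite -ltnS h1.
Qed.

Lemma abel (F : nat -> R) (c : nat -> nat) t : (forall r, (r < t)%N -> (c r <= t)%N) ->
  \sum_(0 <= r < t) F r * q ^+ c r =
  \sum_(0 <= s < t.+1) w s * \sum_(0 <= r < t) (if (s <= c r)%N then F r else 0).
Proof.
move=> hc.
rewrite (@eq_big_nat _ _ _ _ _ _ (fun r => \sum_(0 <= s < t.+1) F r * (if (s <= c r)%N then w s else 0))); last first.
  move=> r /andP[_ hr]; rewrite (geomT (hc r hr)) mulr_sumr //.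
rewrite exchange_big_nat; apply: eq_big_nat => s _.
rewrite mulr_sumr; apply: eq_big_nat => r _.
case: ifP => _; [ring | by rewrite !mulr0].
Qed.

Lemma prefix (F : nat -> R) K t : (K <= t)%N ->
  \sum_(0 <= r < t) (if (r < K)%N then F r else 0) = \sum_(0 <= r < K) F r.
Proof.
move=> h; rewrite (@big_cat_nat _ _ _ K) //=.
rewrite [X in _ + X]big1_seq ?addr0; last first.
  move=> r /andP[_]; rewrite mem_index_iota => /andP[h1 _]; by rewrite ltnNge h1.
by apply: eq_big_nat => r /andP[_ ->].
Qed.

Lemma smallK t (A : pred nat) K : (t <= n)%N ->
  (K <= \sum_(0 <= r < t) (A r : nat))%N ->
  \sum_(0 <= r < K) bb r <= \sum_(0 <= r < t) (if A r then bb r else 0).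
Proof.
elim: t K => [|t IH] K htn.
  rewrite [X in (_ <= X)%N]big_geq // leqn0 => /eqP ->; by rewrite !big_geq.
rewrite !big_nat_recr //=.
have hsum := bool_sum_le A 0 t; rewrite subn0 in hsum.
case hA: (A t) => /=.
  case: K => [|K] hK.
    rewrite big_geq //; apply: addr_ge0 (bb_ge0 _).
    apply: sumr_ge0 => r _; case: ifP => _ //; exact: bb_ge0.
  rewrite big_nat_recr //=; apply: lerD.
    apply: IH; [exact: ltnW | by move: hK; rewrite addn1 ltnS].
  apply: bb_mono => //; move: hK hsum; lia.
rewrite addn0 addr0 => hK; exact: IH (ltnW htn) hK.
Qed.

Lemma crux t : (t <= n)%N -> RR t <= \sum_(k < m) W rho k t.
Proof.
move=> htn; rewrite sumW // /RR.
rewrite (@abel bb); last first.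
  move=> r hr; apply: leq_trans (leq_div _ _) _; lia.
rewrite (@abel bb); last by move=> r _; exact: cc_le.
apply: ler_sum_nat => s _; apply: ler_wpM2l; first exact: w_ge0.
rewrite (@eq_big_nat _ _ _ _ _ _ (fun r => if (r < t - s * m)%N then bb r else 0)); last first.
  move=> r /andP[_ hr]; rewrite leq_divRL //.
  have -> : (s * m <= t.-1 - r)%N = (r < t - s * m)%N by apply/idP/idP; lia.
  by [].
rewrite prefix ?leq_subr //.
apply: smallK => //.
have hl := level_all s t.
have hsplit : (\sum_(0 <= r < t) ((s <= cc t r)%N : nat) + \sum_(0 <= r < t) ((r < n)%N && (cc t r < s)%N) = t)%N.
  rewrite -big_split /=.
  rewrite (@eq_big_nat _ _ _ _ _ _ (fun _ => 1%N)); first by rewrite sum_nat_const_nat muln1 subn0.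
  move=> r /andP[_ hr]; have -> : (r < n)%N by lia.
  by case: leqP.
move: hl hsplit; lia.
Qed.
End Tau.

Lemma makespan_ge0 (rho : {ffun 'I_n -> 'I_m}) : 0 <= makespan (fun _ => 1) (fun i t => b i + a * t) pi rho.
Proof.
rewrite /makespan; elim/big_ind: _ => //.
  by move=> x y hx hy; rewrite le_max hx.
move=> i _; rewrite compE; apply: addr_ge0 (hb _); apply: mulr_ge0 (W_ge0 _ _ _).
exact: ltW q_gt0.
Qed.

Lemma comp_le_makespan (rho : {ffun 'I_n -> 'I_m}) i :
  completion (fun _ => 1) (fun i t => b i + a * t) pi rho i <=
  makespan (fun _ => 1) (fun i t => b i + a * t) pi rho.
Proof. rewrite /makespan; exact: le_bigmax. Qed.

Lemma W_le_makespan (rho : {ffun 'I_n -> 'I_m}) k t : (t <= n)%N ->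
  W rho k t <= makespan (fun _ => 1) (fun i t => b i + a * t) pi rho.
Proof.
elim: t => [|t IH] htn; first exact: makespan_ge0.
rewrite /=; case: ifP => [/andP[ht /eqP e]|_]; last exact: IH (ltnW htn).
have := comp_le_makespan rho (job t); rewrite compE pi_job // /bb.
by rewrite /mach in e; rewrite e.
Qed.
End Proof.

Lemma makespan_ge0' (R : realFieldType) (n m : nat) (a : R) (b : 'I_n -> R) (pi : {perm 'I_n})
  (rho : {ffun 'I_n -> 'I_m}) : 0 < a -> (forall i, 0 <= b i) ->
  0 <= makespan (fun _ => 1) (fun i t => b i + a * t) pi rho.
Proof.
move=> ha hb; rewrite /makespan; apply: (big_ind (fun x => 0 <= x)) => //.
  by move=> x y hx hy; rewrite le_max hx.
move=> i _; rewrite (compE a b pi i); apply: addr_ge0 (hb _).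
apply: mulr_ge0 (W_ge0 pi i ha hb _ _ _); exact: ltW (q_gt0 ha).
Qed.

Theorem theorem20 (R : realFieldType) (n m : nat) (a : R) (b : 'I_n -> R)
  (pi : {perm 'I_n}) (sigma : {ffun 'I_n -> 'I_m}) :
  (0 < m)%N -> 0 < a -> (forall i, 0 <= b i) -> SBPT b pi ->
  is_NE (fun _ => 1) (fun i t => b i + a * t) pi sigma ->
  makespan (fun _ => 1) (fun i t => b i + a * t) pi sigma
    <= (2 * m%:R + a * m%:R - 1) / (m%:R + a)
       * OPT (fun _ => 1) (fun i t => b i + a * t) pi sigma.
Proof.
move=> hm ha hb hs hNE.
set c := (2 * m%:R + a * m%:R - 1) / (m%:R + a).
have hm1 : (1 : R) <= m%:R by rewrite ler1n.
have hma : 0 < m%:R + a by move: hm1 ha; lra.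
have hc : 0 <= c.
  rewrite /c; apply: divr_ge0; last exact: ltW.
  have : 0 <= a * m%:R by apply: mulr_ge0; [exact: ltW | exact: ler0n].
  move: hm1; lra.
have key : forall (i : 'I_n) (tau : {ffun 'I_n -> 'I_m}), completion (fun _ => 1) (fun i t => b i + a * t) pi sigma i
    <= c * makespan (fun _ => 1) (fun i t => b i + a * t) pi tau.
  move=> i tau.
  set M := makespan _ _ _ tau.
  have hZ := Z_bound i ha hb hs hNE hm (ltn_ord (pi i)).
  have hcr := crux i ha hb hs tau hm (ltn_ord (pi i)).
  have hsum : \sum_(k < m) W a b pi i tau k (pi i).+1 <= m%:R * M.
    apply: le_trans (_ : \sum_(k < m) M <= _).
      apply: ler_sum => k _; apply: W_le_makespan => //; exact: ltn_ord.
    by rewrite sumr_const card_ord mulr_natl.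
  have hbM : b i <= M.
    apply: le_trans (comp_le_makespan a b pi tau i); rewrite (compE a b pi i).
    rewrite -{1}[b i]add0r lerD2r; apply: mulr_ge0 (W_ge0 pi i ha hb _ _ _); exact: ltW (q_gt0 ha).
  rewrite (compE a b pi i).
  move: hZ; rewrite /S /mach /bb !job_pi => hZ.
  rewrite /c mulrAC ler_pdivlMr //.
  move: hZ hcr hsum hbM; rewrite /RR /q.
  set X := W _ _ _ _ _ _ _.
  set Y := \sum_(0 <= r < _) _.
  set Z := \sum_(k < m) _.
  move=> *; nra.
have hOPT : forall i, completion (fun _ => 1) (fun i t => b i + a * t) pi sigma i
    <= c * OPT (fun _ => 1) (fun i t => b i + a * t) pi sigma.
  move=> i; rewrite /OPT.
  apply: (big_ind (fun x => completion (fun _ => 1) (fun i t => b i + a * t) pi sigma i <= c * x)).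
  - exact: key.
  - by move=> x y hx hy; case: (leP x y).
  - move=> tau _; exact: key.
have hOPT0 : 0 <= OPT (fun _ => 1) (fun i t => b i + a * t) pi sigma.
  rewrite /OPT; apply: (big_ind (fun x => 0 <= x)).
  - exact: makespan_ge0'.
  - move=> x y hx hy; by rewrite le_min hx.
  - move=> tau _; exact: makespan_ge0'.
rewrite {1}/makespan.
apply: (big_ind (fun x => x <= c * OPT (fun _ => 1) (fun i t => b i + a * t) pi sigma)).
- exact: mulr_ge0.
- by move=> x y hx hy; rewrite ge_max hx.
- move=> i _; exact: hOPT.
Qed.
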